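(* Let $n\ge 2$, and suppose either $n=2$ and $p\geq 2$, or $n\geq 3$ and $p \geq \frac{2n}{n-1}$. Then \[ k_{n,p}(s) \geq \left(\frac{n-1}{n}\right)^p s^p \quad \text{for all } s \geq 0. \]
   Context: Define $\Phi:[0,\infty)\to[0,\infty)$ by $\Phi(t) = n\int_0^t (\sinh r)^{n-1}\,dr$; it is a strictly increasing diffeomorphism with $\Phi(0)=0$ and $\Phi(t)\to\infty$ as $t\to\infty$, with inverse $\Phi^{-1}$. Define $k_{n,p}(s) = \left(\sinh \Phi^{-1}(s)\right)^{p(n-1)} - s^{\frac{p(n-1)}{n}}$ for $s\geq 0$. *)

(* Defs.v *)
From Stdlib Require Import Reals ClassicalEpsilon.
From Coquelicot Require Import Coquelicot.
Open Scope R_scope.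

(* Real power x^y for x >= 0, with the convention 0^y = 0 (used only with y > 0). *)
Definition rpow (x y : R) : R := if Rle_dec x 0 then 0 else Rpower x y.

Definition Phi (n : nat) (t : R) : R :=
  INR n * RInt (fun r => (sinh r) ^ (n - 1)) 0 t.

(* Phi^{-1}(s): the t >= 0 with Phi t = s (Phi is a bijection [0,oo) -> [0,oo)). *)
Definition Phi_inv (n : nat) (s : R) : R :=
  epsilon (inhabits 0) (fun t => 0 <= t /\ Phi n t = s).

Definition k (n : nat) (p s : R) : R :=
  rpow (sinh (Phi_inv n s)) (p * (INR n - 1))
  - rpow s (p * (INR n - 1) / INR n).

(* Main.v *)
Require Import Defs.
From Stdlib Require Import Reals Lra Lia Psatz ClassicalEpsilon.
From Coquelicot Require Import Coquelicot.
Open Scope R_scope.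

Lemma mono0 (F dF : R -> R) (t : R) : 0 <= t ->
  (forall x, 0 < x < t -> is_derive F x (dF x)) ->
  (forall x, 0 <= x <= t -> continuous F x) ->
  (forall x, 0 < x < t -> 0 <= dF x) -> F 0 <= F t.
Proof.
  intros Ht Hd Hc Hp.
  destruct (MVT_gen F 0 t (fun x => Rmax 0 (dF x))) as [c [_ Hc']].
  - intros x Hx. rewrite Rmin_left in Hx by lra. rewrite Rmax_right in Hx by lra.
    rewrite Rmax_right by (apply Hp; lra). apply Hd; lra.
  - intros x Hx. rewrite Rmin_left in Hx by lra. rewrite Rmax_right in Hx by lra.
    apply continuity_pt_filterlim. apply Hc; lra.
  - assert (0 <= Rmax 0 (dF c)) by apply Rmax_l. nra.
Qed.

Lemma exp_mul_opp x : exp x * exp (- x) = 1.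
Proof. rewrite <- exp_plus. replace (x + - x) with 0 by ring. apply exp_0. Qed.

Lemma cosh_ge1 x : 1 <= cosh x.
Proof. unfold cosh. pose proof (exp_mul_opp x). pose proof (exp_pos x). pose proof (exp_pos (-x)).
  set (a := exp x) in *. set (b := exp (-x)) in *.
  assert (0 <= (a - b) * (a - b)) by apply Rle_0_sqr. assert ((a + b) * (a + b) >= 4) by nra.
  assert (a + b >= 2). { apply Rnot_lt_ge; intro. assert (0 < 2 - (a+b)) by lra. nra. } lra. Qed.

Lemma sinh_le_cosh x : sinh x <= cosh x.
Proof. unfold cosh, sinh. pose proof (exp_pos (-x)). lra. Qed.

Lemma cosh2 x : cosh x ^ 2 = 1 + sinh x ^ 2.
Proof. unfold cosh, sinh. pose proof (exp_mul_opp x). nra. Qed.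

Lemma sinh_pos x : 0 < x -> 0 < sinh x.
Proof. intros. unfold sinh. assert (exp (-x) < exp x) by (apply exp_increasing; lra). lra. Qed.

Lemma sinh_0' : sinh 0 = 0.
Proof. unfold sinh. replace (-0) with 0 by ring. lra. Qed.

Lemma is_derive_sinh x : is_derive sinh x (cosh x).
Proof. apply is_derive_Reals. apply derivable_pt_lim_sinh. Qed.

Lemma is_derive_cosh x : is_derive cosh x (sinh x).
Proof. apply is_derive_Reals. apply derivable_pt_lim_cosh. Qed.

Lemma cont_sinh x : continuous sinh x.
Proof. apply (@ex_derive_continuous R_AbsRing R_NormedModule). eexists. apply is_derive_sinh. Qed.

Lemma cont_cosh x : continuous cosh x.
Proof. apply (@ex_derive_continuous R_AbsRing R_NormedModule). eexists. apply is_derive_cosh. Qed.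

Lemma cont_sinhpow m x : continuous (fun r => sinh r ^ m) x.
Proof. apply (@ex_derive_continuous R_AbsRing R_NormedModule). eexists. apply (is_derive_comp (fun y => y ^ m) sinh).
  - apply is_derive_Reals. apply derivable_pt_lim_pow.
  - apply is_derive_sinh. Qed.

Lemma RInt_sinh_derive m x : is_derive (fun t => RInt (fun r => sinh r ^ m) 0 t) x (sinh x ^ m).
Proof.
  apply (is_derive_RInt (fun r => sinh r ^ m) _ 0).
  - apply filter_forall; intros b. apply (RInt_correct (V:=R_CompleteNormedModule)).
    apply ex_RInt_continuous; intros; apply cont_sinhpow.
  - apply cont_sinhpow.
Qed.

Lemma Phi_derive n x : is_derive (Phi n) x (INR n * sinh x ^ (n - 1)).
Proof.
  unfold Phi. apply (is_derive_scal (fun t => RInt (fun r => sinh r ^ (n-1)) 0 t)).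
  apply RInt_sinh_derive.
Qed.

Lemma Phi_cont n x : continuous (Phi n) x.
Proof. apply (@ex_derive_continuous R_AbsRing R_NormedModule). eexists. apply Phi_derive. Qed.

Lemma Phi_0 n : Phi n 0 = 0.
Proof. unfold Phi. rewrite RInt_point. unfold zero; simpl. ring. Qed.

Lemma mono0' (F dF : R -> R) (t : R) : 0 <= t ->
  (forall x, 0 <= x <= t -> is_derive F x (dF x)) ->
  (forall x, 0 < x < t -> 0 <= dF x) -> F 0 <= F t.
Proof.
  intros Ht Hd Hp. apply (mono0 F dF); auto.
  - intros; apply Hd; lra.
  - intros x Hx. apply (@ex_derive_continuous R_AbsRing R_NormedModule). eexists. apply Hd; auto.
Qed.

Lemma is_derive_sinhpow m x : is_derive (fun r => sinh r ^ m) x (INR m * sinh x ^ (pred m) * cosh x).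
Proof. replace (INR m * sinh x ^ (pred m) * cosh x) with (cosh x * (INR m * sinh x ^ (pred m))) by ring.
  apply (is_derive_comp (fun y => y ^ m) sinh).
  - apply is_derive_Reals. apply derivable_pt_lim_pow.
  - apply is_derive_sinh. Qed.

Lemma is_derive_pow' m x : is_derive (fun r => r ^ m) x (INR m * x ^ (pred m)).
Proof. apply is_derive_Reals. apply derivable_pt_lim_pow. Qed.

Lemma sinh_ge x : 0 <= x -> x <= sinh x.
Proof.
  intros Hx. pose proof (mono0' (fun r => sinh r - r) (fun r => cosh r - 1) x Hx) as H.
  cbv beta in H; rewrite sinh_0' in H. cut (0 - 0 <= sinh x - x). lra. apply H.
  - intros y _. apply (is_derive_minus sinh (fun r => r)). apply is_derive_sinh. apply is_derive_Reals, derivable_pt_lim_id.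
  - intros y _. pose proof (cosh_ge1 y). lra.
Qed.

Lemma sinh_nonneg x : 0 <= x -> 0 <= sinh x.
Proof. intros. pose proof (sinh_ge x H). lra. Qed.

Lemma Phi_ge n t : (1 <= n)%nat -> 0 <= t -> t ^ n <= Phi n t.
Proof.
  intros Hn Ht. pose proof (mono0' (fun r => Phi n r - r ^ n)
     (fun r => INR n * sinh r ^ (n - 1) - INR n * r ^ (pred n)) t Ht) as H.
  cbv beta in H; rewrite Phi_0 in H. simpl in H. cut (0 - 0 ^ n <= Phi n t - t ^ n).
  { rewrite pow_i by lia. lra. } apply H.
  - intros y _. apply (is_derive_minus (Phi n) (fun r => r ^ n)). apply Phi_derive. apply is_derive_pow'.
  - intros y Hy. replace (pred n) with (n - 1)%nat by lia.
    assert (y ^ (n-1) <= sinh y ^ (n-1)). { apply pow_incr. split. lra. apply sinh_ge; lra. }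
    pose proof (pos_INR n). nra.
Qed.

Lemma Phi_le n t : (1 <= n)%nat -> 0 <= t -> Phi n t <= sinh t ^ n.
Proof.
  intros Hn Ht. pose proof (mono0' (fun r => sinh r ^ n - Phi n r)
     (fun r => INR n * sinh r ^ (pred n) * cosh r - INR n * sinh r ^ (n - 1)) t Ht) as H.
  cbv beta in H; rewrite Phi_0, sinh_0' in H. cut (0 ^ n - 0 <= sinh t ^ n - Phi n t).
  { rewrite pow_i by lia. lra. } apply H.
  - intros y _. apply (is_derive_minus (fun r => sinh r ^ n) (Phi n)). apply is_derive_sinhpow. apply Phi_derive.
  - intros y Hy. replace (pred n) with (n - 1)%nat by lia.
    assert (0 <= sinh y ^ (n-1)). { apply pow_le. apply sinh_nonneg; lra. }
    pose proof (pos_INR n). pose proof (cosh_ge1 y).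
    assert (0 <= INR n * sinh y ^ (n-1)) by nra. nra.
Qed.

Lemma Phi_le2 n t : (2 <= n)%nat -> 0 <= t -> (INR n - 1) * Phi n t <= INR n * sinh t ^ (n - 1).
Proof.
  intros Hn Ht. pose proof (mono0' (fun r => INR n * sinh r ^ (n - 1) - (INR n - 1) * Phi n r)
     (fun r => INR n * (INR (n - 1) * sinh r ^ (pred (n - 1)) * cosh r) - (INR n - 1) * (INR n * sinh r ^ (n - 1))) t Ht) as H.
  cbv beta in H; rewrite Phi_0, sinh_0' in H. cut (INR n * 0 ^ (n - 1) - (INR n - 1) * 0 <= INR n * sinh t ^ (n - 1) - (INR n - 1) * Phi n t).
  { rewrite pow_i by lia. lra. } apply H.
  - intros y _. apply (is_derive_minus (fun r => INR n * sinh r ^ (n - 1)) (fun r => (INR n - 1) * Phi n r)).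
    + apply (is_derive_scal (fun r => sinh r ^ (n - 1))). apply is_derive_sinhpow.
    + apply (is_derive_scal (Phi n)). apply Phi_derive.
  - intros y Hy. rewrite minus_INR by lia. simpl INR.
    replace (n - 1)%nat with (S (pred (n - 1))) by lia. rewrite <- tech_pow_Rmult.
    replace (pred (S (pred (n-1)))) with (pred (n - 1)) by lia.
    assert (0 <= sinh y ^ (pred (n-1))). { apply pow_le. apply sinh_nonneg; lra. }
    assert (1 <= INR n - 1). { assert (2 <= INR n) by (apply (le_INR 2); lia). lra. }
    pose proof (sinh_le_cosh y). 
    assert (0 <= INR n * (INR n - 1) * sinh y ^ pred (n - 1) * (cosh y - sinh y)).
    { apply Rmult_le_pos; [|lra]. apply Rmult_le_pos; auto. nra. }
    nra.
Qed.

Lemma pow_ge_self T m : (1 <= m)%nat -> 1 <= T -> T <= T ^ m.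
Proof. intros. replace m with (S (pred m)) by lia. simpl.
  pose proof (pow_R1_Rle T (pred m) H0). nra. Qed.

Lemma Phi_surj n s : (1 <= n)%nat -> 0 <= s -> exists t, 0 <= t /\ Phi n t = s.
Proof.
  intros Hn Hs.
  assert (Hc : continuity (Phi n)).
  { intros x. apply continuity_pt_filterlim. apply Phi_cont. }
  destruct (IVT_gen (Phi n) 0 (s + 1) s Hc) as [x [Hx1 Hx2]].
  - rewrite Phi_0. pose proof (Phi_ge n (s+1) Hn ltac:(lra)).
    pose proof (pow_ge_self (s+1) n Hn ltac:(lra)).
    rewrite Rmin_left by lra. rewrite Rmax_right by lra. lra.
  - exists x. rewrite Rmin_left in Hx1 by lra. split; lra.
Qed.

Lemma Phi_inv_spec n s : (1 <= n)%nat -> 0 <= s -> 0 <= Phi_inv n s /\ Phi n (Phi_inv n s) = s.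
Proof. intros. unfold Phi_inv. apply epsilon_spec. apply Phi_surj; auto. Qed.

Lemma rpow_pos x e : 0 < x -> rpow x e = Rpower x e.
Proof. intros. unfold rpow. destruct (Rle_dec x 0); [lra|auto]. Qed.

Lemma rpow_nonpos x e : x <= 0 -> rpow x e = 0.
Proof. intros. unfold rpow. destruct (Rle_dec x 0); [auto|lra]. Qed.

Lemma rpow_ge0 x e : 0 <= rpow x e.
Proof. unfold rpow. destruct (Rle_dec x 0). lra. unfold Rpower. pose proof (exp_pos (e * ln x)). lra. Qed.

Lemma Rpower_one_base e : Rpower 1 e = 1.
Proof. unfold Rpower. rewrite ln_1. rewrite Rmult_0_r. apply exp_0. Qed.

Lemma Rpower_le_self x e : 1 <= e -> 0 < x <= 1 -> Rpower x e <= x.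
Proof.
  intros He Hx. replace e with (1 + (e - 1)) by ring. rewrite Rpower_plus, Rpower_1 by lra.
  assert (Rpower x (e - 1) <= 1). { apply Rle_trans with (Rpower 1 (e-1)); [apply Rle_Rpower_l; lra | rewrite Rpower_one_base; lra]. }
  assert (0 < Rpower x (e-1)) by (unfold Rpower; apply exp_pos). nra.
Qed.

Lemma Rpower_gt0 x e : 0 < Rpower x e.
Proof. unfold Rpower; apply exp_pos. Qed.

Lemma locally_pos x : 0 < x -> locally x (fun t => 0 < t).
Proof.
  intros Hx. exists (mkposreal x Hx). intros y Hy. simpl in Hy.
  unfold ball in Hy; simpl in Hy. unfold AbsRing_ball, abs, minus, plus, opp in Hy; simpl in Hy.
  apply Rabs_def2 in Hy. lra.
Qed.

Lemma is_derive_rpow x e : 0 < x -> is_derive (fun t => rpow t e) x (e * Rpower x (e - 1)).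
Proof.
  intros Hx. apply (is_derive_ext_loc (fun t => Rpower t e)).
  - generalize (locally_pos x Hx). apply filter_imp. intros t Ht. rewrite rpow_pos; auto.
  - apply is_derive_Reals. apply derivable_pt_lim_power; auto.
Qed.

Lemma cont_rpow x e : 1 <= e -> 0 <= x -> continuous (fun t => rpow t e) x.
Proof.
  intros He Hx. destruct (Rle_lt_or_eq_dec 0 x Hx) as [Hlt|Heq].
  - apply (@ex_derive_continuous R_AbsRing R_NormedModule). eexists. apply is_derive_rpow; auto.
  - subst x. apply continuity_pt_filterlim. apply continuity_pt_locally. intros eps.
    assert (Hd : 0 < Rmin 1 eps) by (apply Rmin_pos; [lra| apply cond_pos]).
    exists (mkposreal _ Hd). intros y Hy. simpl in Hy.
    unfold ball in Hy; simpl in Hy. unfold AbsRing_ball, abs, minus, plus, opp in Hy; simpl in Hy.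
    rewrite Ropp_0, Rplus_0_r in Hy. apply Rabs_def2 in Hy.
    pose proof (Rmin_l 1 eps). pose proof (Rmin_r 1 eps).
    rewrite (rpow_nonpos 0) by lra. rewrite Rminus_0_r.
    destruct (Rle_dec y 0).
    + rewrite rpow_nonpos by auto. rewrite Rabs_R0. apply cond_pos.
    + rewrite rpow_pos by lra. pose proof (Rpower_le_self y e He ltac:(lra)).
      pose proof (Rpower_gt0 y e). rewrite Rabs_right by lra. lra.
Qed.

Lemma cont_rpow_comp (f : R -> R) x e : 1 <= e -> 0 <= f x -> continuous f x ->
  continuous (fun t => rpow (f t) e) x.
Proof. intros. apply (continuous_comp f (fun u => rpow u e)); auto. apply cont_rpow; auto. Qed.

Lemma is_derive_rpow_comp (f : R -> R) x df e : 0 < f x -> is_derive f x df ->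
  is_derive (fun t => rpow (f t) e) x (e * Rpower (f x) (e - 1) * df).
Proof.
  intros Hp Hd. replace (e * Rpower (f x) (e - 1) * df) with (df * (e * Rpower (f x) (e - 1))) by ring.
  apply (is_derive_comp (fun u => rpow u e) f); auto. apply is_derive_rpow; auto.
Qed.

Lemma Phi2 t : 0 <= t -> Phi 2 t = 2 * (cosh t - 1).
Proof.
  intros Ht.
  assert (Hd : forall x, is_derive (fun r => Phi 2 r - 2 * cosh r) x 0).
  { intros x. replace 0 with (INR 2 * sinh x ^ (2 - 1) - 2 * sinh x) by (simpl; ring).
    apply (is_derive_minus (Phi 2) (fun r => 2 * cosh r)). apply Phi_derive.
    apply (is_derive_scal cosh). apply is_derive_cosh. }
  pose proof (mono0' (fun r => Phi 2 r - 2 * cosh r) (fun _ => 0) t Ht (fun x _ => Hd x) (fun _ _ => Rle_refl 0)) as H1.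
  assert (Hd' : forall x, is_derive (fun r => - (Phi 2 r - 2 * cosh r)) x (- 0)).
  { intros x. apply (is_derive_opp (fun r => Phi 2 r - 2 * cosh r)). apply Hd. }
  pose proof (mono0' (fun r => - (Phi 2 r - 2 * cosh r)) (fun _ => - 0) t Ht (fun x _ => Hd' x) (fun _ _ => ltac:(lra))) as H2.
  cbv beta in H1, H2. rewrite Phi_0, cosh_0 in H1, H2. lra.
Qed.

Lemma superadd A B q : 0 < A -> 0 < B -> 1 <= q -> Rpower A q + Rpower B q <= Rpower (A + B) q.
Proof.
  intros HA HB Hq. replace q with (1 + (q - 1)) by ring. rewrite !Rpower_plus, !Rpower_1 by lra.
  assert (Rpower A (q-1) <= Rpower (A+B) (q-1)) by (apply Rle_Rpower_l; lra).
  assert (Rpower B (q-1) <= Rpower (A+B) (q-1)) by (apply Rle_Rpower_l; lra).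
  nra.
Qed.

Lemma Rpower2 x : 0 < x -> Rpower x 2 = x ^ 2.
Proof. intros. rewrite <- Rpower_pow by auto. f_equal. Qed.

Lemma case2 p s : 2 <= p -> 0 <= s -> k 2 p s >= rpow ((INR 2 - 1) / INR 2) p * rpow s p.
Proof.
  intros Hp Hs. unfold k. replace (INR 2) with 2 by (simpl; ring).
  destruct (Phi_inv_spec 2 s ltac:(lia) Hs) as [Ht HPhi].
  set (t := Phi_inv 2 s) in *.
  destruct (Rle_lt_or_eq_dec 0 s Hs) as [Hsp|Hs0].
  2:{ rewrite <- Hs0. rewrite !(rpow_nonpos 0) by lra. pose proof (rpow_ge0 (sinh t) (p * (2 - 1))). lra. }
  rewrite Phi2 in HPhi by auto.
  set (u := cosh t - 1) in *.
  assert (Hu : 0 < u) by lra.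
  assert (Hy2 : sinh t ^ 2 = u ^ 2 + 2 * u) by (pose proof (cosh2 t); unfold u; nra).
  assert (Hy : 0 < sinh t).
  { pose proof (sinh_nonneg t Ht). destruct (Rle_lt_or_eq_dec 0 (sinh t) H); auto.
    rewrite <- e in Hy2. nra. }
  rewrite !rpow_pos by lra.
  replace (p * (2 - 1)) with p by ring.
  rewrite Rpower_mult_distr by lra.
  replace ((2 - 1) / 2 * s) with u by (rewrite <- HPhi; field).
  replace (Rpower (sinh t) p) with (Rpower (u ^ 2 + 2 * u) (p / 2)).
  2:{ rewrite <- Hy2, <- Rpower2, Rpower_mult by auto. f_equal; try field. }
  replace (Rpower u p) with (Rpower (u ^ 2) (p / 2)).
  2:{ rewrite <- Rpower2, Rpower_mult by auto. f_equal; try field. }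
  rewrite <- HPhi. replace (p * (2 - 1) / 2) with (p / 2) by field.
  pose proof (superadd (u ^ 2) (2 * u) (p / 2) ltac:(nra) ltac:(lra) ltac:(lra)). lra.
Qed.

Lemma cont_mult (f g : R -> R) x : continuous f x -> continuous g x -> continuous (fun t => f t * g t) x.
Proof. apply (@continuous_mult R_UniformSpace R_AbsRing f g x). Qed.
Lemma cont_minus (f g : R -> R) x : continuous f x -> continuous g x -> continuous (fun t => f t - g t) x.
Proof. apply (@continuous_minus R_UniformSpace R_AbsRing R_NormedModule f g x). Qed.
Lemma is_derive_mult' (f g : R -> R) x df dg : is_derive f x df -> is_derive g x dg ->
  is_derive (fun t => f t * g t) x (df * g x + f x * dg).
Proof. intros. apply (is_derive_mult f g); auto. intros; apply Rmult_comm. Qed.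

Lemma params n p : (3 <= n)%nat -> 2 * INR n / (INR n - 1) <= p ->
  3 <= INR n /\ 2 <= p * (INR n - 1) / INR n /\ 2 < p /\ INR n <= p * (INR n - 1) - INR n.
Proof.
  intros Hn Hp. assert (HN : 3 <= INR n) by (replace 3 with (INR 3) by (simpl; ring); apply le_INR; lia).
  assert (H1 : 2 * INR n <= p * (INR n - 1)).
  { apply Rmult_le_compat_r with (r := INR n - 1) in Hp; [|lra].
    replace (2 * INR n / (INR n - 1) * (INR n - 1)) with (2 * INR n) in Hp by (field; lra). lra. }
  split; auto. split.
  - apply Rmult_le_reg_r with (INR n); [lra|]. replace (p * (INR n - 1) / INR n * INR n) with (p * (INR n - 1)) by (field; lra). lra.
  - split. 2: lra. apply Rnot_le_lt. intro. assert (p * (INR n - 1) <= 2 * (INR n - 1)) by (apply Rmult_le_compat_r; lra). lra.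
Qed.

Lemma Phi_pos n t : (1 <= n)%nat -> 0 < t -> 0 < Phi n t.
Proof. intros. pose proof (Phi_ge n t H ltac:(lra)). pose proof (pow_lt t n H0). lra. Qed.

Lemma Rpower_pow' y m : 0 < y -> y ^ m = Rpower y (INR m).
Proof. intros. rewrite Rpower_pow; auto. Qed.

Lemma Phi_nonneg n t : (1 <= n)%nat -> 0 <= t -> 0 <= Phi n t.
Proof. intros. pose proof (Phi_ge n t H H0). pose proof (pow_le t n H0). lra. Qed.

Lemma g_nonneg n p t : (3 <= n)%nat -> 2 * INR n / (INR n - 1) <= p -> 0 <= t ->
  0 <= rpow (sinh t) (p * (INR n - 1) - INR n) * cosh t
       - rpow (Phi n t) (p * (INR n - 1) / INR n - 1)
       - rpow ((INR n - 1) / INR n * Phi n t) (p - 1).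
Proof.
  intros Hn Hp Ht. destruct (params n p Hn Hp) as [HN [Ha [Hp2 He]]].
  set (N := INR n) in *. set (a := p * (N - 1) / N) in *. set (e := p * (N - 1) - N) in *.
  set (c := (N - 1) / N).
  pose proof (mono0 (fun r => rpow (sinh r) e * cosh r - rpow (Phi n r) (a - 1) - rpow (c * Phi n r) (p - 1))
    (fun r => (e * Rpower (sinh r) (e - 1) * cosh r * cosh r + rpow (sinh r) e * sinh r)
       - (a - 1) * Rpower (Phi n r) (a - 1 - 1) * (N * sinh r ^ (n - 1))
       - (p - 1) * Rpower (c * Phi n r) (p - 1 - 1) * (c * (N * sinh r ^ (n - 1)))) t Ht) as H.
  cbv beta in H. rewrite sinh_0', Phi_0, Rmult_0_r, !(rpow_nonpos 0) in H by lra.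
  cut (0 * cosh 0 - 0 - 0 <= rpow (sinh t) e * cosh t - rpow (Phi n t) (a - 1) - rpow (c * Phi n t) (p - 1)).
  { lra. }
  apply H; clear H.
  - intros x Hx. assert (Hs : 0 < sinh x) by (apply sinh_pos; lra).
    assert (HS : 0 < Phi n x) by (apply Phi_pos; lia || lra).
    assert (Hc : 0 < c) by (unfold c; apply Rdiv_lt_0_compat; lra).
    apply (is_derive_minus (fun r => rpow (sinh r) e * cosh r - rpow (Phi n r) (a - 1)) (fun r => rpow (c * Phi n r) (p - 1))).
    apply (is_derive_minus (fun r => rpow (sinh r) e * cosh r) (fun r => rpow (Phi n r) (a - 1))).
    + apply (is_derive_mult' (fun r => rpow (sinh r) e) cosh).
      * apply (is_derive_rpow_comp sinh); auto. apply is_derive_sinh.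
      * apply is_derive_cosh.
    + apply (is_derive_rpow_comp (Phi n)); auto. apply Phi_derive.
    + apply (is_derive_rpow_comp (fun r => c * Phi n r)). nra.
      apply (is_derive_scal (Phi n)). apply Phi_derive.
  - intros x Hx. apply cont_minus; [apply cont_minus|].
    + apply cont_mult. apply cont_rpow_comp. lra. apply sinh_nonneg; lra. apply cont_sinh. apply cont_cosh.
    + apply cont_rpow_comp. lra. apply Phi_nonneg; lia || lra. apply Phi_cont.
    + apply cont_rpow_comp. lra.
      assert (0 <= c) by (unfold c; apply Rdiv_le_0_compat; lra).
      pose proof (Phi_nonneg n x ltac:(lia) ltac:(lra)). nra.
      apply cont_mult. apply continuous_const. apply Phi_cont.
  - intros x Hx.
    assert (Hs : 0 < sinh x) by (apply sinh_pos; lra).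
    assert (HS : 0 < Phi n x) by (apply Phi_pos; lia || lra).
    assert (Hc : 0 < c) by (unfold c; apply Rdiv_lt_0_compat; lra).
    set (y := sinh x) in *. set (S := Phi n x) in *. set (h := cosh x).
    assert (Hh : h * h = 1 + y * y) by (pose proof (cosh2 x); unfold h, y; simpl in *; lra).
    assert (HSy : S <= y ^ n) by (apply Phi_le; lia || lra).
    assert (HSy2 : c * S <= y ^ (n - 1)).
    { pose proof (Phi_le2 n x ltac:(lia) ltac:(lra)). fold S y N in H.
      unfold c. apply Rmult_le_reg_l with N; [lra|]. replace (N * ((N - 1) / N * S)) with ((N-1) * S) by (field; lra). lra. }
    rewrite rpow_pos by auto.
    set (E := Rpower y (e - 1)).
    assert (HE : 0 < E) by apply Rpower_gt0.
    assert (Y1 : y ^ (n - 1) = Rpower y (N - 1)).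
    { rewrite Rpower_pow' by auto. rewrite minus_INR by lia. reflexivity. }
    assert (F1 : Rpower S (a - 1 - 1) <= Rpower y (N * (a - 2))).
    { replace (N * (a - 2)) with (N * (a - 1 - 1)) by ring. rewrite <- Rpower_mult.
      apply Rle_Rpower_l. lra. split; auto. unfold N; rewrite Rpower_pow by auto. exact HSy. }
    assert (F2 : Rpower (c * S) (p - 1 - 1) <= Rpower y ((N - 1) * (p - 2))).
    { replace ((N - 1) * (p - 2)) with ((N - 1) * (p - 1 - 1)) by ring. rewrite <- Rpower_mult.
      apply Rle_Rpower_l. lra. split. nra. rewrite <- Y1. exact HSy2. }
    assert (I1 : Rpower y (N * (a - 2)) * Rpower y (N - 1) = E).
    { rewrite <- Rpower_plus. unfold E. f_equal. unfold a, e. field. lra. }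
    assert (I2 : Rpower y ((N - 1) * (p - 2)) * Rpower y (N - 1) = E * (y * y)).
    { rewrite <- Rpower_plus. unfold E. replace (y * y) with (Rpower y 2) by (rewrite Rpower2 by auto; ring).
      rewrite <- Rpower_plus. f_equal. unfold e. ring. }
    assert (I3 : Rpower y e = E * y).
    { unfold E. replace (Rpower y (e - 1) * y) with (Rpower y (e - 1) * Rpower y 1) by (rewrite Rpower_1 by auto; ring). rewrite <- Rpower_plus. f_equal. ring. }
    rewrite I3, Y1.
    assert (Hy1 : 0 < Rpower y (N - 1)) by apply Rpower_gt0.
    assert (B1 : (a - 1) * Rpower S (a - 1 - 1) * (N * Rpower y (N - 1)) <= (a - 1) * N * E).
    { rewrite <- I1. assert (0 <= (a - 1) * N * Rpower y (N - 1)) by (apply Rmult_le_pos; [apply Rmult_le_pos|]; lra).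
      nra. }
    assert (B2 : (p - 1) * Rpower (c * S) (p - 1 - 1) * (c * (N * Rpower y (N - 1))) <= (p - 1) * (N - 1) * (E * (y * y))).
    { rewrite <- I2. assert (cN : c * N = N - 1) by (unfold c; field; lra).
      assert (K0 : 0 <= (p - 1) * c * N * Rpower y (N - 1)).
      { apply Rmult_le_pos; [|lra]. apply Rmult_le_pos; [|lra]. apply Rmult_le_pos; lra. }
      apply Rle_trans with ((p - 1) * c * N * Rpower y (N - 1) * Rpower y ((N - 1) * (p - 2))).
      - replace ((p - 1) * Rpower (c * S) (p - 1 - 1) * (c * (N * Rpower y (N - 1))))
          with ((p - 1) * c * N * Rpower y (N - 1) * Rpower (c * S) (p - 1 - 1)) by ring.
        apply Rmult_le_compat_l; auto.
      - right. replace ((p - 1) * c * N) with ((p - 1) * (c * N)) by ring. rewrite cN. ring. }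
    assert (EQ : e * E * h * h + E * y * y - (a - 1) * N * E - (p - 1) * (N - 1) * (E * (y * y)) = 0).
    { replace (e * E * h * h) with (e * E * (h * h)) by ring. rewrite Hh. unfold a, e. field. lra. }
    lra.
Qed.

Lemma G_nonneg n p t : (3 <= n)%nat -> 2 * INR n / (INR n - 1) <= p -> 0 <= t ->
  rpow ((INR n - 1) / INR n) p * rpow (Phi n t) p <=
  rpow (sinh t) (p * (INR n - 1)) - rpow (Phi n t) (p * (INR n - 1) / INR n).
Proof.
  intros Hn Hp Ht. pose proof (g_nonneg n p) as Hg. destruct (params n p Hn Hp) as [HN [Ha [Hp2 He]]].
  set (N := INR n) in *. set (a := p * (N - 1) / N) in *. set (e := p * (N - 1) - N) in *.
  set (c := (N - 1) / N) in *.
  assert (Hc : 0 < c) by (unfold c; apply Rdiv_lt_0_compat; lra).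
  pose proof (mono0 (fun r => rpow (sinh r) (p * (N - 1)) - rpow (Phi n r) a - rpow c p * rpow (Phi n r) p)
    (fun r => p * (N - 1) * Rpower (sinh r) (p * (N - 1) - 1) * cosh r
       - a * Rpower (Phi n r) (a - 1) * (N * sinh r ^ (n - 1))
       - rpow c p * (p * Rpower (Phi n r) (p - 1) * (N * sinh r ^ (n - 1)))) t Ht) as H.
  cbv beta in H. rewrite sinh_0', Phi_0, !(rpow_nonpos 0) in H by lra.
  cut (0 - 0 - rpow c p * 0 <= rpow (sinh t) (p * (N - 1)) - rpow (Phi n t) a - rpow c p * rpow (Phi n t) p).
  { lra. }
  apply H; clear H.
  - intros x Hx. assert (Hs : 0 < sinh x) by (apply sinh_pos; lra).
    assert (HS : 0 < Phi n x) by (apply Phi_pos; lia || lra).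
    apply (is_derive_minus (fun r => rpow (sinh r) (p * (N - 1)) - rpow (Phi n r) a) (fun r => rpow c p * rpow (Phi n r) p)).
    apply (is_derive_minus (fun r => rpow (sinh r) (p * (N - 1))) (fun r => rpow (Phi n r) a)).
    + apply (is_derive_rpow_comp sinh); auto. apply is_derive_sinh.
    + apply (is_derive_rpow_comp (Phi n)); auto. apply Phi_derive.
    + apply (is_derive_scal (fun r => rpow (Phi n r) p)).
      apply (is_derive_rpow_comp (Phi n)); auto. apply Phi_derive.
  - intros x Hx. assert (0 <= Phi n x) by (apply Phi_nonneg; lia || lra).
    apply cont_minus; [apply cont_minus|].
    + apply cont_rpow_comp. nra. apply sinh_nonneg; lra. apply cont_sinh.
    + apply cont_rpow_comp. lra. auto. apply Phi_cont.
    + apply cont_mult. apply continuous_const. apply cont_rpow_comp. lra. auto. apply Phi_cont.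
  - intros x Hx.
    assert (Hs : 0 < sinh x) by (apply sinh_pos; lra).
    assert (HS : 0 < Phi n x) by (apply Phi_pos; lia || lra).
    specialize (Hg x Hn Hp ltac:(lra)). fold N a e c in Hg.
    rewrite !rpow_pos in Hg by nra. rewrite rpow_pos by auto.
    set (y := sinh x) in *. set (S := Phi n x) in *. set (h := cosh x) in *.
    assert (Y1 : y ^ (n - 1) = Rpower y (N - 1)).
    { rewrite Rpower_pow' by auto. rewrite minus_INR by lia. reflexivity. }
    rewrite Y1.
    assert (I1 : Rpower y (p * (N - 1) - 1) = Rpower y e * Rpower y (N - 1)).
    { rewrite <- Rpower_plus. f_equal. unfold e. ring. }
    assert (I2 : Rpower c p * Rpower S (p - 1) = c * Rpower (c * S) (p - 1)).
    { replace p with (1 + (p - 1)) at 1 by ring. rewrite Rpower_plus, Rpower_1 by auto.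
      rewrite Rmult_assoc, Rpower_mult_distr by auto. reflexivity. }
    assert (cN : c * N = N - 1) by (unfold c; field; lra).
    assert (aN : a * N = p * (N - 1)) by (unfold a; field; lra).
    assert (EQ : p * (N - 1) * Rpower y (p * (N - 1) - 1) * h - a * Rpower S (a - 1) * (N * Rpower y (N - 1))
       - Rpower c p * (p * Rpower S (p - 1) * (N * Rpower y (N - 1)))
       = p * (N - 1) * Rpower y (N - 1) * (Rpower y e * h - Rpower S (a - 1) - Rpower (c * S) (p - 1))).
    { rewrite I1. replace (Rpower c p * (p * Rpower S (p - 1) * (N * Rpower y (N - 1))))
        with ((Rpower c p * Rpower S (p - 1)) * p * N * Rpower y (N - 1)) by ring.
      rewrite I2.
      replace (a * Rpower S (a - 1) * (N * Rpower y (N - 1))) with ((a * N) * Rpower S (a - 1) * Rpower y (N - 1)) by ring.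
      rewrite aN.
      replace (c * Rpower (c * S) (p - 1) * p * N * Rpower y (N - 1)) with ((c * N) * Rpower (c * S) (p - 1) * p * Rpower y (N - 1)) by ring.
      rewrite cN. ring. }
    rewrite EQ. apply Rmult_le_pos; auto.
    apply Rmult_le_pos. apply Rmult_le_pos; lra. apply Rlt_le, Rpower_gt0.
Qed.

Theorem lemma2p1 (n : nat) (p : R) :
  (2 <= n)%nat ->
  ((n = 2%nat /\ 2 <= p) \/ ((3 <= n)%nat /\ 2 * INR n / (INR n - 1) <= p)) ->
  forall s : R, 0 <= s ->
    k n p s >= rpow ((INR n - 1) / INR n) p * rpow s p.
Proof.
  intros Hn Hcase s Hs. destruct Hcase as [[-> Hp] | [Hn3 Hp]].
  - apply case2; auto.
  - destruct (Phi_inv_spec n s ltac:(lia) Hs) as [Ht HPhi].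
    unfold k. pose proof (G_nonneg n p (Phi_inv n s) Hn3 Hp Ht). rewrite HPhi in H. lra.
Qed.
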